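(* Let $L$ be even, let $\mathcal{C}\in\mathsf{SCAC}(L,3)$ and let $\mathcal{I}=\{0,q_1,q_1+q_2\}\in\mathcal{C}$ with $q_1,q_2\ge 1$, $q_1+q_2<L$, and put $q_3=L-q_1-q_2$. Assume $q_1,q_2,q_3$ are pairwise distinct, and let $q_l<q_m<q_u$ be $q_1,q_2,q_3$ in increasing order, so that $d^*(\mathcal{I})=\{q_l,q_m,q_u,L-q_u,L-q_m,L-q_l\}$. If $q_u\ge L/2$, then (i) $|d^+(\mathcal{I})|=8$ if $q_m=q_l+1=(L+2)/4$ and $q_u=L/2$; and (ii) $|d^+(\mathcal{I})|\ge 10$ otherwise.
   Context: Identify $\mathbb{Z}_L$ with $\{0,1,\dots,L-1\}$; $\mathcal{P}(L,\omega)$ is the set of $\omega$-element subsets of $\mathbb{Z}_L$ (codewords). For $\mathcal{I}\in\mathcal{P}(L,\omega)$: $d(\mathcal{I})=\{a-b \bmod L: a,b\in\mathcal{I}\}$, $d^*(\mathcal{I})=d(\mathcal{I})\setminus\{0\}$, $d^+(\mathcal{I})=\{x+\epsilon \bmod L: x\in d^*(\mathcal{I}),\epsilon\in\{0,1\}\}$. A strongly conflict-avoiding code (SCAC) of length $L$ and weight $\omega$ is a set $\mathcal{C}=\{\mathcal{I}_1,\dots,\mathcal{I}_M\}\subseteq\mathcal{P}(L,\omega)$ such that for all $j\ne k$, $\big(d^*(\mathcal{I}_j)\cup(d^*(\mathcal{I}_j)+1)\cup(d^*(\mathcal{I}_j)-1)\big)\cap d(\mathcal{I}_k)=\emptyset$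 (shifts mod $L$); $\mathsf{SCAC}(L,\omega)$ is the class of all such codes. (Equivalently: $\{1,L-1\}\cap d^*(\mathcal{I}_j)=\emptyset$ for all $j$ and $d^+(\mathcal{I}_j)\cap d^+(\mathcal{I}_k)=\emptyset$ for $j\ne k$.) *)

(* Defs.v *)
(* Z_L is modelled by 'I_L (values 0..L-1), arithmetic mod L on nat values. *)
From mathcomp Require Import all_boot.
Set Implicit Arguments. Unset Strict Implicit. Unset Printing Implicit Defensive.

Definition dset (L : nat) (I : {set 'I_L}) : {set 'I_L} :=
  [set x : 'I_L | [exists a in I, exists b in I, val x == (val a + (L - val b)) %% L]].

Definition dstar (L : nat) (I : {set 'I_L}) : {set 'I_L} :=
  [set x in dset I | val x != 0].

Definition dplus (L : nat) (I : {set 'I_L}) : {set 'I_L} :=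
  [set x : 'I_L | [exists y in dstar I, (val x == val y %% L) || (val x == (val y + 1) %% L)]].

(* SCAC(L, w), in the "equivalent" form given in the context:
   every codeword has w elements, {1, L-1} does not meet d*(I_j),
   and d+(I_j), d+(I_k) are disjoint for distinct codewords. *)
Definition is_SCAC (L w : nat) (C : {set {set 'I_L}}) : Prop :=
  (forall I, I \in C -> #|I| = w) /\
  (forall I, I \in C -> forall x, x \in dstar I -> val x != 1 /\ val x != L - 1) /\
  (forall J K, J \in C -> K \in C -> J != K -> [disjoint dplus J & dplus K]).

(* Main.v *)
Require Import Defs.
From mathcomp Require Import all_boot zify.

Lemma card_valset (L : nat) (s : seq nat) : all (fun n => n < L) s ->
  #|[set x : 'I_L | val x \in s]| = size (undup s).
Proof.
move=> hs.
have hu : uniq (pmap insub (undup s) : seq 'I_L) by apply: pmap_sub_uniq; apply: undup_uniq.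
move/card_uniqP: hu => hc.
have hsz : size (pmap insub (undup s) : seq 'I_L) = size (undup s).
  rewrite size_pmap_sub; apply/eqP; rewrite -all_count; apply/allP=> n.
  rewrite mem_undup => hn; exact: (allP hs).
rewrite -hsz -hc.
apply: eq_card => x; rewrite inE mem_pmap_sub /= mem_undup. by [].
Qed.

Lemma undup_sorted2 x y s : path leq x (y :: s) ->
  size (undup [:: x, y & s]) = (x != y) + size (undup (y :: s)).
Proof.
move=> hp.
have hx : (x \in y :: s) = (x == y).
  apply/idP/idP; last by move/eqP->; rewrite mem_head.
  rewrite inE => /orP [//|hxs].
  move: hp => /= /andP [hxy hps].
  have := order_path_min leq_trans hps. move/allP/(_ x hxs) => hyx.
  by rewrite eqn_leq hxy hyx.
rewrite [undup (x :: _)]/= hx. by case: eqP.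
Qed.

Fixpoint nsteps (x : nat) (s : seq nat) : nat :=
  if s is y :: s' then (x != y) + nsteps y s' else 0.

Lemma size_undup_sorted x s : path leq x s -> size (undup (x :: s)) = (nsteps x s).+1.
Proof.
elim: s x => [|y s IH] x hp; first by [].
rewrite undup_sorted2 // IH /=; last by case/andP: hp.
by rewrite addnS.
Qed.

Lemma eqi_of_all (s t : seq nat) : all (mem t) s -> all (mem s) t -> s =i t.
Proof.
move=> /allP h1 /allP h2 n; apply/idP/idP => hn; [exact: h1 | exact: h2].
Qed.

Lemma mem_small_eq L e v : v < L -> (e = v \/ e = v + L) -> e %% L = v.
Proof.
move=> hv [->|->]; first by rewrite modn_small.
by rewrite modnDr modn_small.
Qed.

Lemma dstar_mem L q1 q2 (x : 'I_L) : 0 < q1 -> 0 < q2 -> q1 + q2 < L ->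
  (x \in dstar [set x : 'I_L | val x \in [:: 0; q1; q1 + q2]]) =
  (val x \in [:: q1; q2; L - q1 - q2; L - q1; L - q2; L - (L - q1 - q2)]).
Proof.
move=> h1 h2 h3.
have hL : 0 < L by lia.
have hx := ltn_ord x.
rewrite /dstar inE /dset inE.
apply/idP/idP.
- case/andP => /existsP [a /andP [ha /existsP [b /andP [hb /eqP hxab]]]] hx0.
  move: ha hb; rewrite !inE => ha hb.
  move: hx0; rewrite hxab.
  have hq1 : q1 < L by clear -h3; lia.
  have hq12 : L - q1 - q2 < L by clear -h1 h3; lia.
  have hq2 : q2 < L by clear -h3; lia.
  have hLq1 : L - q1 < L by clear -h1 h3; lia.
  have hLq2 : L - q2 < L by clear -h2 h3; lia.
  have hLq12 : L - (L - q1 - q2) < L by clear -h1 h3; lia.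
  clear hxab; case/or3P: ha => /eqP ->; case/or3P: hb => /eqP -> hx0.
  + by move: hx0; rewrite (@mem_small_eq L _ 0) //; right; clear -h1 h3; lia.
  + rewrite (@mem_small_eq L _ (L - q1)) //; last by left; clear; lia.
    by rewrite ?inE eqxx ?orbT.
  + rewrite (@mem_small_eq L _ (L - q1 - q2)) //; last by left; clear -h3; lia.
    by rewrite ?inE eqxx ?orbT.
  + rewrite (@mem_small_eq L _ q1) //; last by right; clear; lia.
    by rewrite ?inE eqxx ?orbT.
  + by move: hx0; rewrite (@mem_small_eq L _ 0) //; right; clear -h1 h3; lia.
  + rewrite (@mem_small_eq L _ (L - q2)) //; last by left; clear -h3; lia.
    by rewrite ?inE eqxx ?orbT.
  + rewrite (@mem_small_eq L _ (L - (L - q1 - q2))) //; last by right; clear -h3; lia.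
    by rewrite ?inE eqxx ?orbT.
  + rewrite (@mem_small_eq L _ q2) //; last by right; clear -h3; lia.
    by rewrite ?inE eqxx ?orbT.
  + by move: hx0; rewrite (@mem_small_eq L _ 0) //; right; clear -h1 h3; lia.
- have hq1 : q1 < L by lia.
  pose o0 := Ordinal hL.
  pose o1 := Ordinal hq1.
  pose o2 := Ordinal h3.
  have i0 : o0 \in [set x : 'I_L | val x \in [:: 0; q1; q1 + q2]] by rewrite inE /= inE eqxx.
  have i1 : o1 \in [set x : 'I_L | val x \in [:: 0; q1; q1 + q2]] by rewrite inE /= !inE eqxx orbT.
  have i2 : o2 \in [set x : 'I_L | val x \in [:: 0; q1; q1 + q2]] by rewrite inE /= !inE eqxx !orbT.
  have ex : forall a b, a \in [set x : 'I_L | val x \in [:: 0; q1; q1 + q2]] ->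
      b \in [set x : 'I_L | val x \in [:: 0; q1; q1 + q2]] ->
      (nat_of_ord a + (L - nat_of_ord b) = nat_of_ord x \/ nat_of_ord a + (L - nat_of_ord b) = nat_of_ord x + L) ->
      0 < nat_of_ord x ->
      [exists a0 in [set x0 : 'I_L | val x0 \in [:: 0; q1; q1 + q2]],
       exists b0 in [set x0 : 'I_L | val x0 \in [:: 0; q1; q1 + q2]],
       val x == (val a0 + (L - val b0)) %% L] && (val x != 0).
    move=> a b ha hb he hx0; apply/andP; split; last by rewrite -lt0n.
    apply/existsP; exists a; rewrite ha /=.
    apply/existsP; exists b; rewrite hb /=; apply/eqP; symmetry; exact: mem_small_eq.
  rewrite !inE => H; simpl in H.
  case/orP: H => [/eqP H|H]; first by apply: (ex o1 o0) => //=; clear -H h1 h2 h3; lia.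
  case/orP: H => [/eqP H|H]; first by apply: (ex o2 o1) => //=; clear -H h1 h2 h3; lia.
  case/orP: H => [/eqP H|H]; first by apply: (ex o0 o2) => //=; clear -H h1 h2 h3; lia.
  case/orP: H => [/eqP H|H]; first by apply: (ex o0 o1) => //=; clear -H h1 h2 h3; lia.
  case/orP: H => [/eqP H|/eqP H]; first by apply: (ex o1 o2) => //=; clear -H h1 h2 h3; lia.
  by apply: (ex o2 o0) => //=; clear -H h1 h2 h3; lia.
Qed.

Lemma dplus_mem L (D : {set 'I_L}) (s : seq nat) :
  (forall y : 'I_L, (y \in dstar D) = (val y \in s)) -> all (fun n => n.+1 < L) s ->
  forall x : 'I_L, (x \in dplus D) = (val x \in s ++ map S s).
Proof.
move=> hD hs x; rewrite /dplus inE mem_cat; apply/existsP/idP.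
- case=> y /andP [hy h].
  have hy' : val y \in s by rewrite -hD.
  have hlt := allP hs _ hy'.
  have hy1 : val y < L by clear -hlt; lia.
  have hy2 : val y + 1 < L by clear -hlt; lia.
  rewrite (modn_small hy1) (modn_small hy2) in h.
  case/orP: h => /eqP ->; first by rewrite hy'.
  by rewrite addn1 map_f ?orbT.
- case/orP => [hx|hm]; last move/mapP: hm => [n hn hxn].
    by exists x; rewrite hD hx /= modn_small ?eqxx.
  have hlt := allP hs _ hn.
  have hn' : n < L by clear -hlt; lia.
  have hn1 : n + 1 < L by clear -hlt; lia.
  exists (Ordinal hn'); rewrite hD /= hn /= (modn_small hn') (modn_small hn1).
  by rewrite hxn addn1 eqxx orbT.
Qed.

Lemma size_undup_eqi (s t : seq nat) : s =i t -> size (undup s) = size (undup t).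
Proof.
move=> h; apply: perm_size; apply: uniq_perm; rewrite ?undup_uniq // => x.
by rewrite !mem_undup h.
Qed.

Lemma eqi_catS (s t : seq nat) : s =i t -> s ++ map S s =i t ++ map S t.
Proof.
move=> h n; rewrite !mem_cat h; congr (_ || _); exact: (eq_mem_map S h n).
Qed.

Ltac simp_bools :=
  repeat match goal with |- context[(?a != ?b)] =>
    first [ rewrite (_ : (a != b) = true); last by lia
          | rewrite (_ : (a != b) = false); last by lia ] end.

Ltac closeall := rewrite /= ?inE ?eqxx /= ?orbT.

Theorem mainTheorem2 (L : nat) (C : {set {set 'I_L}}) (q1 q2 : nat) :
  ~~ odd L ->
  is_SCAC 3 C ->
  0 < q1 -> 0 < q2 -> q1 + q2 < L ->
  [set x : 'I_L | val x \in [:: 0; q1; q1 + q2]] \in C ->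
  let q3 := L - q1 - q2 in
  q1 != q2 -> q2 != q3 -> q1 != q3 ->
  forall ql qm qu : nat,
    perm_eq [:: ql; qm; qu] [:: q1; q2; q3] -> ql < qm -> qm < qu ->
    L <= 2 * qu ->
    let I := [set x : 'I_L | val x \in [:: 0; q1; q1 + q2]] in
    ((qm = ql + 1 /\ 4 * qm = L + 2 /\ 2 * qu = L) -> #|dplus I| = 8) /\
    (~ (qm = ql + 1 /\ 4 * qm = L + 2 /\ 2 * qu = L) -> 10 <= #|dplus I|).
Proof.
move=> hev [_ [hC2 _]] h1 h2 h3 hIC q3 h12 h23 h13 ql qm qu hperm hlm hmu hqu I.
clear h12 h23 h13.
have hD := fun x => @dstar_mem L q1 q2 x h1 h2 h3.
set S6 := [:: q1; q2; L - q1 - q2; L - q1; L - q2; L - (L - q1 - q2)] in hD.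
have hS6E : S6 = [:: q1; q2; q3] ++ map (subn L) [:: q1; q2; q3] by [].
have hlt : all (fun n => n < L) S6.
  by rewrite /S6 /=; repeat (apply/andP; split); try done; clear -h1 h2 h3; lia.
have hS6 : forall n, n \in S6 -> n != 1 /\ n != L - 1.
  move=> n hn; have hnL := allP hlt n hn.
  have := hC2 _ hIC (Ordinal hnL); rewrite hD /=; exact.
have hS6' : all (fun n => n.+1 < L) S6.
  apply/allP => n hn; have [_ hn2] := hS6 n hn; have hnL := allP hlt n hn.
  clear -hn2 hnL; lia.
have [hq1 _] := hS6 q1 (mem_head _ _).
have [hq2 _] : q2 != 1 /\ q2 != L - 1 by apply: hS6; rewrite !inE eqxx orbT.
have [hq3 _] : L - q1 - q2 != 1 /\ L - q1 - q2 != L - 1 by apply: hS6; rewrite !inE eqxx !orbT.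
have hsum := perm_sumn hperm; rewrite /= /q3 in hsum.
have hsum' : ql + qm + qu = L by clear -hsum h3; lia.
have hml : ql \in [:: q1; q2; q3] by rewrite -(perm_mem hperm) mem_head.
have hge2 : 2 <= ql.
  move: hml; rewrite /q3 !inE; case/or3P => /eqP ->.
  + by clear -hq1 h1; lia.
  + by clear -hq2 h2; lia.
  + by clear -hq3 h3; lia.
have hodd : exists k, L = k.*2.
  exists L./2; by rewrite -[LHS](odd_double_half L) (negbTE hev).
case: hodd => k hk; rewrite -muln2 in hk.
have hcard : #|dplus I| = size (undup (S6 ++ map S S6)).
  rewrite -(@card_valset L); last first.
    apply/allP => n; rewrite mem_cat => /orP [hn|/mapP [m hm ->]].
      by have := allP hS6' n hn; clear; lia.
    exact: allP hS6' m hm.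
  apply: eq_card => x; rewrite [in RHS]inE; exact: (dplus_mem _ _ _ hD hS6' x).
rewrite hcard.
set T6 := [:: ql; qm; qu] ++ map (subn L) [:: ql; qm; qu].
have hT6 : S6 =i T6.
  move=> n; rewrite hS6E /T6 !mem_cat (perm_mem hperm).
  by rewrite (perm_mem (perm_map (subn L) hperm)).
have hT12 : S6 ++ map S S6 =i T6 ++ map S T6.
  exact: eqi_catS.
have hmem : forall T : seq nat, (T6 ++ map S T6) =i T ->
    size (undup (S6 ++ map S S6)) = size (undup T).
  by move=> T hT; apply: size_undup_eqi => m; rewrite hT12 hT.
clear hcard hD hS6 hS6' hlt hS6E hC2 hIC hml hsum hq1 hq2 hq3 hperm hT12 hT6.
case: (ltnP L (2 * qu)) => hcase.
{ rewrite (hmem [:: ql; ql.+1; qm; qm.+1; L - qu; (L - qu).+1; qu; qu.+1; L - qm; (L - qm).+1; L - ql; (L - ql).+1]);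
    last by apply: eqi_of_all; closeall.
  rewrite size_undup_sorted /=; last first.
    by repeat (apply/andP; split); try done; clear -hsum' hcase hlm hmu hge2; lia.
  simp_bools.
  split; lia. }
{ rewrite (hmem [:: ql; ql.+1; qm; qm.+1; L - qu; qu; (L - qu).+1; qu.+1; L - qm; (L - qm).+1; L - ql; (L - ql).+1]);
    last by apply: eqi_of_all; closeall.
  rewrite size_undup_sorted /=; last first.
    by repeat (apply/andP; split); try done; clear -hsum' hcase hlm hmu hge2 hqu; lia.
  simp_bools.
  split; lia. }
Qed.
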